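(* Let $d\ge2$ and let $H$ be a finite family of closed halfspaces in $\mathbb{R}^d$ whose bounding hyperplanes pass through the origin, such that no $h\in H$ is bounded by the hyperplane $T_d=\{x\in\mathbb{R}^d\mid x_d=0\}$. Let $C=\bigcap_{h\in H}h$. If $C\subseteq T_d^>\cup\{0\}$, where $T_d^>=\{x\in\mathbb{R}^d\mid x_d>0\}$, then there is a subfamily $H'\subseteq H$ with $|H'|\le 2d-2$ such that $\bigcap_{h\in H'}h\subseteq T_d^>\cup\{0\}$. *)

(* Defs.v *)
From mathcomp Require Import all_boot all_order all_algebra.
Set Implicit Arguments. Unset Strict Implicit. Unset Printing Implicit Defensive.
Import Order.TTheory GRing.Theory Num.Theory.
Local Open Scope ring_scope.

Definition dotv (R : realFieldType) (d : nat) (a x : 'rV[R]_d) : R :=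
  \sum_(i < d) a 0 i * x 0 i.

(* The closed halfspace { x | <a, x> >= 0 } whose bounding hyperplane
   { x | <a, x> = 0 } passes through the origin (a <> 0 required separately). *)
Definition halfspace (R : realFieldType) (d : nat) (a : 'rV[R]_d) : pred 'rV[R]_d :=
  fun x => 0 <= dotv a x.

Definition cap_halfspaces (R : realFieldType) (d m : nat)
  (a : 'I_m -> 'rV[R]_d) (S : {set 'I_m}) : pred 'rV[R]_d :=
  fun x => [forall i in S, halfspace (a i) x].

(* T_d^> ∪ {0}, in dimension d = n.+2; x_d is the last coordinate. *)
Definition upper_or_zero (R : realFieldType) (n : nat) (x : 'rV[R]_n.+2) : Prop :=
  0 < x 0 ord_max \/ x = 0.

Definition last_basis (R : realFieldType) (n : nat) : 'rV[R]_n.+2 :=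
  \row_(i < n.+2) (if i == ord_max then 1 else 0).

(* Main.v *)
Require Import Defs.
From mathcomp Require Import all_boot all_order all_algebra.
From mathcomp Require Import reals.
From Stdlib Require Import Classical.
From mathcomp Require Import zify.
Import Order.TTheory GRing.Theory Num.Theory.
Local Open Scope ring_scope.
Set Implicit Arguments. Unset Strict Implicit. Unset Printing Implicit Defensive.

Section Dot.
Variables (R : realFieldType) (d : nat).
Implicit Types (a b x y : 'rV[R]_d).

Lemma dotvDl a b x : dotv (a + b) x = dotv a x + dotv b x.
Proof. rewrite /dotv -big_split; apply: eq_bigr => i _; by rewrite mxE mulrDl. Qed.
Lemma dotvZl k a x : dotv (k *: a) x = k * dotv a x.
Proof. rewrite /dotv mulr_sumr; apply: eq_bigr => i _; by rewrite mxE mulrA. Qed.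
Lemma dotv0l x : dotv 0 x = 0.
Proof. rewrite /dotv big1 // => i _; by rewrite mxE mul0r. Qed.
Lemma dotvNl a x : dotv (- a) x = - dotv a x.
Proof. by rewrite -scaleN1r dotvZl mulN1r. Qed.
Lemma dotvBl a b x : dotv (a - b) x = dotv a x - dotv b x.
Proof. by rewrite dotvDl dotvNl. Qed.
Lemma dotvC a x : dotv a x = dotv x a.
Proof. by apply: eq_bigr => i _; rewrite mulrC. Qed.
Lemma dotvDr a x y : dotv a (x + y) = dotv a x + dotv a y.
Proof. by rewrite !(dotvC a) dotvDl. Qed.
Lemma dotvZr k a x : dotv a (k *: x) = k * dotv a x.
Proof. by rewrite !(dotvC a) dotvZl. Qed.
Lemma dotvBr a x y : dotv a (x - y) = dotv a x - dotv a y.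
Proof. by rewrite !(dotvC a) dotvBl. Qed.
Lemma dotv_suml (I : finType) (P : pred I) (F : I -> 'rV[R]_d) x :
  dotv (\sum_(i | P i) F i) x = \sum_(i | P i) dotv (F i) x.
Proof.
by apply: (big_morph (fun a => dotv a x) (fun a b => dotvDl a b x) (dotv0l x)).
Qed.
Lemma dotv_ge0 x : 0 <= dotv x x.
Proof. by apply: sumr_ge0 => i _; rewrite -expr2 sqr_ge0. Qed.
Lemma dotv_eq0 x : dotv x x = 0 -> x = 0.
Proof.
move=> h; apply/rowP => j; rewrite !mxE.
have hp : forall i : 'I_d, predT i -> 0 <= x 0 i * x 0 i.
  by move=> i _; rewrite -expr2 sqr_ge0.
have := psumr_eq0P hp h isT (i:=j).
by move/eqP; rewrite -expr2 sqrf_eq0 => /eqP.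
Qed.
End Dot.
Section Farkas.
Variables (R : realFieldType) (d : nat).

Lemma farkas (I : finType) n : forall (F : I -> 'rV[R]_d) (P : {set I}) b,
  #|P| = n ->
  (forall x, (forall i, i \in P -> 0 <= dotv (F i) x) -> 0 <= dotv b x) ->
  exists lam : I -> R, (forall i, 0 <= lam i) /\ b = \sum_(i in P) lam i *: F i.
Proof.
elim: n => [|n IH] F P b hP hyp.
  move/eqP: hP; rewrite cards_eq0 => /eqP hP0; subst P.
  exists (fun _ => 0); split => //; rewrite big_set0.
  have := hyp (- b); rewrite dotvC dotvNl oppr_ge0.
  have h0 : forall i, i \in (set0 : {set I}) -> 0 <= dotv (F i) (- b) by move=> i; rewrite inE.
  move=> /(_ h0) hle; apply: dotv_eq0; apply/eqP; rewrite eq_le hle dotv_ge0 //.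
have /card_gt0P [i iP] : (0 < #|P|)%N by rewrite hP.
set P' := P :\ i.
have hP' : #|P'| = n by move: hP; rewrite (cardsD1 i P) iP add1n => -[].
have inP : forall j, j \in P -> j = i \/ j \in P'.
  move=> j jP; case: (boolP (j == i)) => [/eqP ->|ji]; first by left.
  by right; rewrite in_setD1 ji jP.
case: (classic (forall x, (forall j, j \in P' -> 0 <= dotv (F j) x) -> 0 <= dotv b x)) => [hc|hc].
  have [lam [lam0 hb]] := IH F P' b hP' hc.
  exists (fun j => if j == i then 0 else lam j); split.
    by move=> j; case: ifP.
  rewrite (big_setD1 i iP) /= eqxx scale0r add0r hb.
  apply: eq_bigr => j; rewrite in_setD1 => /andP[/negbTE -> _] //.
have [x' hx'] := not_all_ex_not _ _ hc.
have [hx'1 hx'2] := imply_to_and _ _ hx'.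
have bx' : dotv b x' < 0 by rewrite ltNge; apply/negP.
set a := F i.
have ax' : dotv a x' < 0.
  rewrite ltNge; apply/negP => ha; move: hx'2; apply; apply: hyp => j /inP [->|] //.
  exact: hx'1.
have ax'0 : dotv a x' != 0 by rewrite lt_eqF.
pose Fh j := F j - (dotv (F j) x' / dotv a x') *: a.
pose bh := b - (dotv b x' / dotv a x') *: a.
have key : forall v y, dotv v (y - (dotv a y / dotv a x') *: x') =
    dotv (v - (dotv v x' / dotv a x') *: a) y.
  move=> v y; rewrite dotvBr dotvZr dotvBl dotvZl.
  by congr (_ - _); rewrite mulrAC [RHS]mulrAC [dotv a y * _]mulrC.
have [lam [lam0 hb]] : exists lam : I -> R, (forall i, 0 <= lam i) /\ bh = \sum_(j in P') lam j *: Fh j.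
  apply: (IH Fh P' bh hP') => y hy.
  rewrite /bh -key; apply: hyp => j /inP [->|jP'].
    by rewrite key /a divff // scale1r subrr dotv0l.
  by rewrite key; apply: hy.
pose S := \sum_(j in P') lam j * dotv (F j) x'.
have S0 : 0 <= S by apply: sumr_ge0 => j jP; apply: mulr_ge0 => //; apply: hx'1.
pose s := (dotv b x' - S) / dotv a x'.
exists (fun j => if j == i then s else lam j); split.
  move=> j; case: ifP => // _.
  rewrite /s -mulrNN -invrN; apply: divr_ge0; rewrite oppr_ge0 ?subr_le0; apply: ltW => //.
  exact: lt_le_trans bx' S0.
rewrite (big_setD1 i iP) /= eqxx.
have -> : \sum_(j in P :\ i) (if j == i then s else lam j) *: F j = \sum_(j in P') lam j *: F j.
  by apply: eq_bigr => j; rewrite in_setD1 => /andP[/negbTE -> _].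
have hb2 : b = bh + (dotv b x' / dotv a x') *: a by rewrite /bh subrK.
rewrite hb2 hb /Fh.
have -> : \sum_(j in P') lam j *: (F j - (dotv (F j) x' / dotv a x') *: a) =
   \sum_(j in P') lam j *: F j - (S / dotv a x') *: a.
  rewrite /S mulr_suml scaler_suml -sumrB; apply: eq_bigr => j _.
  by rewrite scalerBr scalerA mulrA.
rewrite /s mulrBl scalerBl; rewrite addrC.
by rewrite -addrA (addrC (- _)).
Qed.
End Farkas.
Section Reduce.
Variable (R : realFieldType).

Lemma reduce_pos (I : finType) (c mu : I -> R) i0 :
  (forall i, 0 <= c i) -> (forall i, c i = 0 -> mu i = 0) -> 0 < mu i0 ->
  exists t : R, (forall i, 0 <= c i - t * mu i) /\
     (exists i, c i != 0 /\ c i - t * mu i = 0).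
Proof.
move=> c0 hcm mu0.
case: (@arg_minP _ _ I i0 (fun j => 0 < mu j) (fun j => c j / mu j) mu0) => j muj hmin.
exists (c j / mu j); split.
  move=> i; rewrite subr_ge0; case: (ltP 0 (mu i)) => hi.
    by rewrite -ler_pdivlMr //; apply: hmin.
  apply: le_trans (c0 i); rewrite mulr_ge0_le0 //.
  by apply: divr_ge0 => //; apply: ltW.
exists j; split; last by rewrite divfK ?subrr // gt_eqF.
by apply/eqP => /hcm /eqP; rewrite gt_eqF.
Qed.

Lemma reduce (I : finType) (c mu : I -> R) :
  (forall i, 0 <= c i) -> (forall i, c i = 0 -> mu i = 0) -> (exists i, mu i != 0) ->
  exists t : R, (forall i, 0 <= c i - t * mu i) /\
     (exists i, c i != 0 /\ c i - t * mu i = 0).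
Proof.
move=> c0 hcm [i0 hi0].
case: (ltP 0 (mu i0)) => hp; first exact: reduce_pos hp.
have hn : 0 < - mu i0 by rewrite oppr_gt0 lt_neqAle hi0 hp.
have [t [h1 [i [h2 h3]]]] := @reduce_pos I c (fun i => - mu i) i0 c0
   (fun i h => ltac:(by rewrite /= hcm // oppr0)) hn.
by exists (- t); split => [k|]; [rewrite mulNr -mulrN; apply: h1 | exists i; rewrite mulNr -mulrN].
Qed.
End Reduce.
Section Span.
Variables (R : realFieldType) (d m : nat) (V : 'I_m -> 'rV[R]_d).

Definition spanT (T : {set 'I_m}) : 'M[R]_d := (\sum_(i in T) <<V i>>)%MS.

Lemma V_span (T : {set 'I_m}) i : i \in T -> (V i <= spanT T)%MS.
Proof. by move=> iT; apply: (sumsmx_sup i) => //; rewrite genmxE. Qed.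

Lemma comb_span (T : {set 'I_m}) (c : 'I_m -> R) (P : pred 'I_m) :
  {subset P <= T} -> ((\sum_(i | P i) c i *: V i)%R <= spanT T)%MS.
Proof. by move=> sPT; apply: summx_sub => i Pi; apply: scalemx_sub; apply: V_span; apply: sPT. Qed.

Lemma span_comb (T : {set 'I_m}) v : (v <= spanT T)%MS ->
  exists c : 'I_m -> R, v = \sum_(i in T) c i *: V i.
Proof.
move/sub_sumsmxP => [u ->].
have h : forall i, exists a : R, u i *m <<V i>>%MS == a *: V i.
  move=> i; have : (u i *m <<V i>> <= V i)%MS by rewrite -(genmxE (V i)) submxMl.
  move/submxP => [D ->]; by exists (D 0 0); rewrite {1}(mx11_scalar D) mul_scalar_mx.
exists (fun i => xchoose (h i)); apply: eq_bigr => i _; apply/eqP; exact: (xchooseP (h i)).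
Qed.

Lemma span_orth (T : {set 'I_m}) v x : (v <= spanT T)%MS ->
  (forall i, i \in T -> dotv (V i) x = 0) -> dotv v x = 0.
Proof.
move=> /span_comb [c ->] ho; rewrite dotv_suml big1 // => i iT.
by rewrite dotvZl ho ?mulr0.
Qed.

Lemma spanU1 (T : {set 'I_m}) j : j \notin T -> spanT (j |: T) = (<<V j>> + spanT T)%MS.
Proof. by move=> jT; rewrite /spanT big_setU1. Qed.

Lemma rank_add (T : {set 'I_m}) j : ~~ (V j <= spanT T)%MS ->
  \rank (spanT (j |: T)) = (\rank (spanT T)).+1.
Proof.
move=> hj.
have jT : j \notin T by apply/negP => /(V_span) h; rewrite h in hj.
rewrite spanU1 //; apply/eqP; rewrite eqn_leq; apply/andP; split.
  apply: leq_trans (mxrank_adds_leqif _ _) _; rewrite mxrank_gen addnC -[X in (_ <= X)%N]addn1 leq_add2l.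
  exact: rank_leq_row.
apply: rank_ltmx; rewrite ltmxE addsmxSr /=; apply/negP => h.
by move: hj; rewrite (submx_trans _ h) // -{1}(genmxE (V j)) addsmxSl.
Qed.

Definition indep (T : {set 'I_m}) (Y : {set 'I_m}) := forall mu : 'I_m -> R,
  ((\sum_(i in Y) mu i *: V i)%R <= spanT T)%MS -> forall i, i \in Y -> mu i = 0.

Lemma rank_indep (T : {set 'I_m}) n : forall Y : {set 'I_m}, #|Y| = n -> indep T Y ->
  (\rank (spanT T) + #|Y| <= \rank (spanT (T :|: Y)))%N.
Proof.
elim: n => [|n IH] Y hY hi.
  by move/eqP: hY; rewrite cards_eq0 => /eqP ->; rewrite setU0 cards0 addn0.
have /card_gt0P [j jY] : (0 < #|Y|)%N by rewrite hY.
set Y' := Y :\ j.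
have hY' : #|Y'| = n by move: hY; rewrite (cardsD1 j Y) jY add1n => -[].
have sumY : forall mu : 'I_m -> R, \sum_(i in Y) mu i *: V i = mu j *: V j + \sum_(i in Y') mu i *: V i.
  by move=> mu; rewrite (big_setD1 j jY).
have hi' : indep T Y'.
  move=> mu hmu i iY'.
  have := hi (fun k => if k == j then 0 else mu k).
  rewrite sumY eqxx scale0r add0r.
  have -> : \sum_(i in Y') (if i == j then 0 else mu i) *: V i = \sum_(i in Y') mu i *: V i.
    by apply: eq_bigr => k; rewrite in_setD1 => /andP[/negbTE -> _].
  move=> /(_ hmu i); move: iY'; rewrite in_setD1 => /andP[/negbTE -> iY].
  by apply.
have disj : forall k, k \in T -> k \in Y -> False.
  move=> k kT kY; have := hi (fun i => if i == k then 1 else 0).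
  have -> : \sum_(i in Y) (if i == k then 1 else 0) *: V i = V k.
    rewrite (big_setD1 k kY) /= eqxx scale1r big1 => [|i]; first exact: addr0.
    by rewrite in_setD1 => /andP[/negbTE -> _]; rewrite scale0r.
  by move=> /(_ (V_span kT) k kY); rewrite eqxx => /eqP; rewrite oner_eq0.
have hnot : ~~ (V j <= spanT (T :|: Y'))%MS.
  apply/negP => /span_comb [c hc].
  have dTY : [disjoint T & Y'].
    apply/pred0P => k /=; apply/negP => /andP [kT]; rewrite in_setD1 => /andP[_ kY].
    exact: disj kT kY.
  move: hc; rewrite (eq_bigl [predU T & Y']) ?bigU //; last by move=> k; rewrite in_setU.
  move=> hc.
  have := hi (fun k => if k == j then 1 else - c k).
  rewrite sumY eqxx scale1r.
  have -> : \sum_(i in Y') (if i == j then 1 else - c i) *: V i = - \sum_(i in Y') c i *: V i.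
    rewrite -sumrN; apply: eq_bigr => k; rewrite in_setD1 => /andP[/negbTE -> _].
    by rewrite scaleNr.
  rewrite hc addrK => /(_ (comb_span _ (fun k kT => kT)) j jY).
  by rewrite eqxx => /eqP; rewrite oner_eq0.
have -> : T :|: Y = j |: (T :|: Y').
  apply/setP => k; rewrite !inE; case: (boolP (k == j)) => [/eqP -> | kj] /=.
    by rewrite jY orbT.
  by [].
rewrite rank_add // (cardsD1 j Y) jY add1n addnS ltnS.
by apply: IH.
Qed.
End Span.
Section GL.
Variables (R : realFieldType) (d m : nat) (V : 'I_m -> 'rV[R]_d).

Definition orthT (T : {set 'I_m}) x := forall i, i \in T -> dotv (V i) x = 0.
Definition KS (S : {set 'I_m}) x := forall i, i \in S -> 0 <= dotv (V i) x.

Lemma dotv0r (a : 'rV[R]_d) : dotv a 0 = 0.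
Proof. by rewrite dotvC dotv0l. Qed.

Lemma sumV_sub (T : {set 'I_m}) (c : 'I_m -> R) (P : pred 'I_m) :
  (forall i, P i -> c i != 0 -> (V i <= spanT V T)%MS) ->
  ((\sum_(i | P i) c i *: V i)%R <= spanT V T)%MS.
Proof.
move=> h; apply: summx_sub => i Pi; case: (boolP (c i == 0)) => [/eqP ->|ci].
  by rewrite scale0r sub0mx.
by apply: scalemx_sub; apply: h.
Qed.

Lemma init_dep (T : {set 'I_m}) i0 x0 :
  orthT T x0 -> dotv (V i0) x0 < 0 ->
  (forall x, orthT T x -> KS setT x -> x = 0) ->
  exists c : 'I_m -> R, (forall i, 0 <= c i) /\ 0 < c i0 /\
    ((\sum_i c i *: V i)%R <= spanT V T)%MS.
Proof.
move=> ox0 neg hyp.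
pose G (z : ('I_m + ('I_m + 'I_m))%type) :=
  match z with inl i => V i | inr (inl i) => V i | inr (inr i) => - V i end.
pose P := [set z : ('I_m + ('I_m + 'I_m))%type |
  match z with inl _ => true | inr (inl i) => i \in T | inr (inr i) => i \in T end].
have hf : forall x, (forall z, z \in P -> 0 <= dotv (G z) x) -> 0 <= dotv (- V i0) x.
  move=> x hx.
  have ox : orthT T x.
    move=> i iT; apply/eqP; rewrite eq_le.
    have := hx (inr (inr i)); rewrite inE /= dotvNl oppr_ge0 => -> //=.
    by have := hx (inr (inl i)); rewrite inE /= => ->.
  have kx : KS setT x by move=> i _; have := hx (inl i); rewrite inE /=; apply.
  by rewrite (hyp x ox kx) dotv0r.
have [lam [lam0 hl]] := @farkas R d _ #|P| G P (- V i0) erefl hf.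
move: hl; rewrite big_sumType big_sumType /=.
have -> : \sum_(i | inl i \in P) lam (inl i) *: G (inl i) = \sum_i lam (inl i) *: V i.
  by apply: eq_bigl => i; rewrite inE.
move=> hl.
exists (fun i => lam (inl i) + (i == i0)%:R); split.
  by move=> i; apply: addr_ge0 => //; rewrite ler0n.
split; first by rewrite eqxx; apply: ltr_wpDl => //; rewrite ltr01.
set L := \sum_i lam (inl i) *: V i in hl.
set A := \sum_(i | inr (inl i) \in P) _ in hl.
set B := \sum_(i | inr (inr i) \in P) _ in hl.
have hAB : A + B = - V i0 - L by rewrite hl addrAC subrr add0r.
have -> : (\sum_i (lam (inl i) + (i == i0)%:R) *: V i)%R = - (A + B).
  rewrite hAB opprB.
  rewrite (eq_bigr (fun i => lam (inl i) *: V i + (i == i0)%:R *: V i)); last first.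
    by move=> i _; rewrite scalerDl.
  rewrite big_split /= [X in _ + X](bigD1 i0) //= eqxx scale1r [X in _ + (_ + X)]big1; last by move=> i /negbTE ->; rewrite scale0r.
  by rewrite addr0 opprK.
rewrite -scaleN1r; apply: scalemx_sub; apply: addmx_sub.
  apply: sumV_sub => i; rewrite inE => iT _; exact: V_span.
apply: summx_sub => i; rewrite inE => iT; apply: scalemx_sub.
by rewrite /= -scaleN1r; apply: scalemx_sub; exact: V_span.
Qed.

Lemma arith1 (d' a b y k : nat) : (d' - a < k.+1 -> a + y <= b -> b <= d' -> 0 < y -> d' - b < k)%N.
Proof. lia. Qed.
Lemma arith2 (d' a b y s u z : nat) : s = y.+1 -> (u <= s + z -> z <= 2*(d'-b) -> a + y <= b -> b <= d' -> 0 < y -> u <= 2*(d'-a))%N.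
Proof. lia. Qed.

Lemma GL k : forall T : {set 'I_m}, (d - \rank (spanT V T) < k)%N ->
  (forall x, orthT T x -> KS setT x -> x = 0) ->
  exists S : {set 'I_m}, (#|S| <= 2 * (d - \rank (spanT V T)))%N /\
     (forall x, orthT T x -> KS S x -> x = 0).
Proof.
elim: k => [//|k IH] T hk hyp.
case: (classic (forall x, orthT T x -> x = 0)) => [h0|h0].
  by exists set0; split; [rewrite cards0 | move=> x /h0].
have [x0 hx0] := not_all_ex_not _ _ h0.
have [ox0 nx0] := imply_to_and _ _ hx0.
have [i0 neg] : exists i0, dotv (V i0) x0 < 0.
  apply: NNPP => hn; apply: nx0; apply: hyp => // i _.
  rewrite leNgt; apply/negP => hlt; apply: hn; by exists i.
pose V0 := [set i | ~~ (V i <= spanT V T)%MS].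
have hV0 : forall i, i \notin V0 -> (V i <= spanT V T)%MS by move=> i; rewrite inE negbK.
pose Dep (c : 'I_m -> R) := [/\ forall i, 0 <= c i, forall i, i \notin V0 -> c i = 0,
   ((\sum_i c i *: V i)%R <= spanT V T)%MS & exists i, c i != 0].
have [c0 Dc0] : exists c, Dep c.
  have [c [cge [ci0 csp]]] := init_dep ox0 neg hyp.
  exists (fun i => if i \in V0 then c i else 0); split.
  - by move=> i; case: ifP.
  - by move=> i /negbTE ->.
  - have esplit : (\sum_i c i *: V i = \sum_i (if i \in V0 then c i else 0) *: V i
        + \sum_i (if i \in V0 then 0 else c i) *: V i)%R.
      rewrite -big_split; apply: eq_bigr => i _.
      by case: (i \in V0); rewrite /= scale0r ?addr0 ?add0r.
    have -> : (\sum_i (if i \in V0 then c i else 0) *: V i = \sum_i c i *: V i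
        - \sum_i (if i \in V0 then 0 else c i) *: V i)%R by rewrite esplit addrK.
    apply: addmx_sub => //; rewrite -scaleN1r; apply: scalemx_sub.
    apply: sumV_sub => i _; case: ifP => [_|/negbT iV]; first by rewrite eqxx.
    by move=> _; apply: hV0.
  - exists i0; have -> : i0 \in V0.
      rewrite inE; apply/negP => h; have := span_orth h ox0.
      by move/eqP; rewrite lt_eqF.
    by rewrite gt_eqF.
have main : forall N (c : 'I_m -> R), (#|[set i | c i != 0%R]| <= N)%N -> Dep c ->
  exists S : {set 'I_m}, (#|S| <= 2 * (d - \rank (spanT V T)))%N /\
     (forall x, orthT T x -> KS S x -> x = 0).
  elim=> [|N IHN] c hN [cge cV0 csp [y0 cy0]].
    move: hN; rewrite leqn0 cards_eq0 => /eqP hs.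
    have : y0 \in [set i | c i != 0] by rewrite inE.
    by rewrite hs inE.
  set supp := [set i | c i != 0].
  have y0s : y0 \in supp by rewrite inE.
  set Y' := supp :\ y0.
  case: (classic (indep V T Y')) => [hind|hnind].
  + have hr := @rank_indep R d m V T #|Y'| Y' erefl hind.
    have Y'gt : (0 < #|Y'|)%N.
      rewrite lt0n; apply/negP => /eqP /cards0_eq hY0.
      have e : (\sum_i c i *: V i)%R = c y0 *: V y0.
        rewrite (bigD1 y0) //= big1 ?addr0 // => i iy.
        have : i \notin Y' by rewrite hY0 inE.
        rewrite in_setD1 iy inE /= negbK => /eqP ->; by rewrite scale0r.
      have y0V0 : y0 \in V0 by apply: contraR cy0 => /cV0 ->.
      move: y0V0; rewrite inE => /negP; apply.
      have -> : V y0 = (c y0)^-1 *: (c y0 *: V y0) by rewrite scalerA mulVf ?scale1r.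
      by apply: scalemx_sub; rewrite -e.
    set T' := T :|: Y'.
    have rT' : (\rank (spanT V T') <= d)%N by apply: rank_leq_col.
    have hk' : (d - \rank (spanT V T') < k)%N.
      exact: arith1 hk hr rT' Y'gt.
    have hyp' : forall x, orthT T' x -> KS setT x -> x = 0.
      by move=> x ox; apply: hyp => i iT; apply: ox; rewrite inE iT.
    have [Z [hZ1 hZ2]] := IH T' hk' hyp'.
    exists (supp :|: Z); split.
      have hs : #|supp| = #|Y'|.+1 by rewrite (cardsD1 y0 supp) y0s.
      have hU : (#|supp :|: Z| <= #|supp| + #|Z|)%N by rewrite cardsU leq_subr.
      exact: arith2 hs hU hZ1 hr rT' Y'gt.
    move=> x ox kx; apply: hZ2; last by move=> i iZ; apply: kx; rewrite in_setU iZ orbT.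
    have hterm : forall j, 0 <= c j * dotv (V j) x.
      move=> j; case: (boolP (c j == 0)) => [/eqP ->|cj]; first by rewrite mul0r.
      by apply: mulr_ge0 => //; apply: kx; rewrite in_setU inE cj.
    have hsum : \sum_j c j * dotv (V j) x = 0.
      transitivity (\sum_j dotv (c j *: V j) x); first by apply: eq_bigr => j _; rewrite dotvZl.
      by rewrite -dotv_suml (span_orth csp ox).
    move=> i; rewrite inE => /orP [iT|iY]; first exact: ox.
    have := psumr_eq0P (P := predT) (fun j _ => hterm j) hsum (i := i) isT.
    move/eqP; rewrite mulf_eq0 => /orP [ci|/eqP //].
    by move: iY; rewrite in_setD1 inE ci andbF.
  + have [mu [hmu [i1 [i1Y mi1]]]] : exists mu : 'I_m -> R,
       ((\sum_(i in Y') mu i *: V i)%R <= spanT V T)%MS /\ exists i, i \in Y' /\ mu i != 0.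
      apply: NNPP => hn; apply: hnind => mu hmu i iY; apply/eqP.
      case: (boolP (mu i == 0)) => // hne; exfalso; apply: hn; exists mu; split => //.
      by exists i.
    pose mu' i := if i \in Y' then mu i else 0.
    have hcm : forall i, c i = 0 -> mu' i = 0.
      move=> i ci; rewrite /mu' ifF //; apply/negbTE.
      by rewrite in_setD1 inE ci eqxx andbF.
    have hex : exists i, mu' i != 0 by exists i1; rewrite /mu' i1Y.
    have [t [ht1 [j [cj ht2]]]] := @reduce R _ c mu' cge hcm hex.
    pose c' i := c i - t * mu' i.
    apply: (IHN c').
      have hp : [set i | c' i != 0] \proper supp.
        rewrite properEneq; apply/andP; split.
          apply/negP => /eqP he; have : j \in supp by rewrite inE.
          by rewrite -he inE /c' ht2 eqxx.
        apply/subsetP => i; rewrite !inE; apply: contra => /eqP ci.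
        by rewrite /c' ci (hcm i ci) mulr0 subrr.
      by rewrite -ltnS; apply: leq_trans (proper_card hp) hN.
    split.
    - exact: ht1.
    - by move=> i /cV0 ci; rewrite /c' ci (hcm i ci) mulr0 subrr.
    - have -> : (\sum_i c' i *: V i = \sum_i c i *: V i - t *: \sum_(i in Y') mu i *: V i)%R.
        rewrite (big_mkcond (fun i => i \in Y')) scaler_sumr -sumrB; apply: eq_bigr => i _.
        rewrite /c' /mu' scalerBl; case: ifP => _; by rewrite ?scalerA ?mulr0 ?scale0r ?scaler0.
      by apply: addmx_sub => //; rewrite -scaleNr; apply: scalemx_sub.
    - exists y0; rewrite /c' /mu' ifF ?mulr0 ?subr0 //.
      by rewrite in_setD1 eqxx.
exact: (main _ c0 (leqnn _) Dc0).
Qed.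
End GL.
Lemma arith3 (d' y b z u : nat) : (u <= y + z -> z <= 2 * (d' - b) -> y <= b -> b <= d' -> 1 < y -> u <= 2 * d' - 2)%N.
Proof. lia. Qed.

Section Main.
Variables (R : realType) (n m : nat) (a : 'I_m -> 'rV[R]_n.+2).

Lemma capE S x : cap_halfspaces a S x <-> KS a S x.
Proof.
rewrite /cap_halfspaces /KS /halfspace; split.
  by move/forall_inP.
by move=> h; apply/forall_inP.
Qed.

Lemma dot_last x : dotv (last_basis R n) x = x 0 ord_max.
Proof.
rewrite /dotv (bigD1 ord_max) //= big1 ?addr0; first by rewrite mxE eqxx mul1r.
by move=> i /negbTE ih; rewrite mxE ih mul0r.
Qed.

Lemma scale_last_ne0 (r : R) : r != 0 -> r *: last_basis R n != 0.
Proof.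
move=> hr; apply/eqP => /rowP /(_ ord_max); rewrite !mxE eqxx mulr1 => h.
by move: hr; rewrite h eqxx.
Qed.
End Main.

Theorem lemma13 (R : realType) (n m : nat) (a : 'I_m -> 'rV[R]_n.+2)
  (ha_nz : forall i, a i != 0)
  (ha_notTd : forall i, forall c : R, a i != c *: last_basis R n)
  (hC : forall x : 'rV[R]_n.+2, cap_halfspaces a setT x -> upper_or_zero x) :
  exists S : {set 'I_m},
    (#|S| <= 2 * n.+2 - 2)%N /\
    (forall x : 'rV[R]_n.+2, cap_halfspaces a S x -> upper_or_zero x).
Proof.
set e := last_basis R n.
have hf : forall x, (forall i, i \in [set: 'I_m] -> 0 <= dotv (a i) x) -> 0 <= dotv e x.
  move=> x hx; have := hC x (proj2 (capE _ _ _) hx).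
  rewrite /e dot_last; case => [/ltW //|->]; by rewrite mxE.
have [lam [lam0 hl]] := @farkas R n.+2 _ _ a setT e erefl hf.
pose Dep (c : 'I_m -> R) := (forall i, 0 <= c i) /\ exists2 r : R, 0 < r & (\sum_i c i *: a i)%R = r *: e.
have Dl : Dep lam.
  split => //; exists 1; first exact: ltr01.
  by rewrite scale1r hl; apply: eq_bigl => i; rewrite in_setT.
have main : forall N (c : 'I_m -> R), (#|[set i | c i != 0%R]| <= N)%N -> Dep c ->
  exists S : {set 'I_m}, (#|S| <= 2 * n.+2 - 2)%N /\
    (forall x : 'rV[R]_n.+2, cap_halfspaces a S x -> upper_or_zero x).
  elim=> [|N IHN] c hN [cge [r r0 hr]].
    move: hN; rewrite leqn0 cards_eq0 => /eqP hs.
    have : r *: e != 0 by apply: scale_last_ne0; rewrite gt_eqF.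
    rewrite -hr big1 ?eqxx // => i _.
    have : i \notin [set i | c i != 0] by rewrite hs inE.
    by rewrite inE negbK => /eqP ->; rewrite scale0r.
  set Y := [set i | c i != 0].
  have sumY : forall x, \sum_i c i * dotv (a i) x = r * x 0 ord_max.
    move=> x; rewrite -dot_last -/e -dotvZl -hr dotv_suml.
    by apply: eq_bigr => i _; rewrite dotvZl.
  case: (classic (indep a set0 Y)) => [hind|hnind].
  + have hr0 := @rank_indep R n.+2 m a set0 #|Y| Y erefl hind.
    rewrite set0U in hr0.
    have hYr : (#|Y| <= \rank (spanT a Y))%N by apply: leq_trans hr0; apply: leq_addl.
    have Y2 : (1 < #|Y|)%N.
      rewrite ltnNge; apply/negP => hle.
      have hsum1 : forall j, j \in Y -> (forall i, i != j -> c i = 0).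
        move=> j jY i ij; apply/eqP; apply/negPn/negP => ci.
        have : (0 < #|Y :\ j|)%N by apply/card_gt0P; exists i; rewrite in_setD1 ij inE ci.
        by move: hle; rewrite (cardsD1 j) jY add1n ltnS leqn0 => /eqP ->.
      case: (set_0Vmem Y) => [Y0|[j jY]].
        have : r *: e != 0 by apply: scale_last_ne0; rewrite gt_eqF.
        rewrite -hr big1 ?eqxx // => i _.
        have : i \notin Y by rewrite Y0 inE.
        by rewrite inE negbK => /eqP ->; rewrite scale0r.
      have cj : c j != 0 by rewrite inE in jY.
      have : (\sum_i c i *: a i)%R = c j *: a j.
        rewrite (bigD1 j) //= big1 ?addr0 // => i ij.
        by rewrite (hsum1 j jY i ij) scale0r.
      rewrite hr => hej.
      have := ha_notTd j ((c j)^-1 * r); rewrite -/e -scalerA hej scalerA mulVf // scale1r.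
      by rewrite eqxx.
    have hypY : forall x, orthT a Y x -> KS a setT x -> x = 0.
      move=> x ox kx.
      have xd : x 0 ord_max = 0.
        have : r * x 0 ord_max = 0.
          rewrite -sumY big1 // => i _; case: (boolP (c i == 0)) => [/eqP ->|ci].
            by rewrite mul0r.
          by rewrite ox ?mulr0 // inE.
        by move/eqP; rewrite mulf_eq0 gt_eqF //= => /eqP.
      case: (hC x (proj2 (capE _ _ _) kx)) => // h.
      by move: h; rewrite xd ltxx.
    have hk : (n.+2 - \rank (spanT a Y) < (n.+2 - \rank (spanT a Y)).+1)%N by [].
    have [Z [hZ1 hZ2]] := GL hk hypY.
    exists (Y :|: Z); split.
      have hU : (#|Y :|: Z| <= #|Y| + #|Z|)%N by rewrite cardsU leq_subr.
      exact: arith3 hU hZ1 hYr (rank_leq_col _) Y2.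
    move=> x /capE kx.
    case: (boolP (0 < x 0 ord_max)) => [hp|hn]; first by left.
    right.
    have hterm : forall j, 0 <= c j * dotv (a j) x.
      move=> j; case: (boolP (c j == 0)) => [/eqP ->|cj]; first by rewrite mul0r.
      by apply: mulr_ge0 => //; apply: kx; rewrite in_setU inE cj.
    have s0 : 0 <= r * x 0 ord_max by rewrite -sumY; apply: sumr_ge0 => j _.
    have xd : x 0 ord_max = 0.
      apply/eqP; rewrite eq_le; rewrite -leNgt in hn; rewrite hn /=.
      by rewrite -(pmulr_rge0 _ r0).
    have hsum : \sum_j c j * dotv (a j) x = 0 by rewrite sumY xd mulr0.
    apply: hZ2; last by move=> i iZ; apply: kx; rewrite in_setU iZ orbT.
    move=> i; rewrite inE => ci.
    have := psumr_eq0P (P := predT) (fun j _ => hterm j) hsum (i := i) isT.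
    by move/eqP; rewrite mulf_eq0 (negbTE ci) => /eqP.
  + have [mu [hmu [i1 [i1Y mi1]]]] : exists mu : 'I_m -> R,
       ((\sum_(i in Y) mu i *: a i)%R <= spanT a set0)%MS /\ exists i, i \in Y /\ mu i != 0.
      apply: NNPP => hn; apply: hnind => mu hmu i iY; apply/eqP.
      case: (boolP (mu i == 0)) => // hne; exfalso; apply: hn; exists mu; split => //.
      by exists i.
    have hmu0 : (\sum_(i in Y) mu i *: a i)%R = 0.
      by move: hmu; rewrite /spanT big_set0 submx0 => /eqP.
    pose mu' i := if i \in Y then mu i else 0.
    have hcm : forall i, c i = 0 -> mu' i = 0.
      by move=> i ci; rewrite /mu' ifF //; apply/negbTE; rewrite inE ci eqxx.
    have hex : exists i, mu' i != 0 by exists i1; rewrite /mu' i1Y.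
    have [t [ht1 [j [cj ht2]]]] := @reduce R _ c mu' cge hcm hex.
    pose c' i := c i - t * mu' i.
    apply: (IHN c').
      have hp : [set i | c' i != 0] \proper Y.
        rewrite properEneq; apply/andP; split.
          apply/negP => /eqP he; have : j \in Y by rewrite inE.
          by rewrite -he inE /c' ht2 eqxx.
        apply/subsetP => i; rewrite !inE; apply: contra => /eqP ci.
        by rewrite /c' ci (hcm i ci) mulr0 subrr.
      by rewrite -ltnS; apply: leq_trans (proper_card hp) hN.
    split; first exact: ht1.
    exists r => //.
    have -> : (\sum_i c' i *: a i = \sum_i c i *: a i - t *: \sum_(i in Y) mu i *: a i)%R.
      rewrite (big_mkcond (fun i => i \in Y)) scaler_sumr -sumrB; apply: eq_bigr => i _.
      rewrite /c' /mu' scalerBl; case: ifP => _; by rewrite ?scalerA ?mulr0 ?scale0r ?scaler0.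
    by rewrite hmu0 scaler0 subr0.
exact: (main _ lam (leqnn _) Dl).
Qed.
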